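(* Let $d$ be a positive integer and let $K \le k \le d$ be non-negative integers. Let $\mathbf{b} \in \mathbb{R}^d$ be an arbitrary vector and let $\mathbf{a} \in \mathbb{R}^d$ be any $K$-sparse vector (i.e. $\mathbf{a}$ has at most $K$ non-zero entries). Define $$\rho = \frac{\min\{K, d-k\}}{k - K + \min\{K, d-k\}}, \qquad \nu = 1 + \frac{\rho + \sqrt{(4+\rho)\rho}}{2}.$$ Then $$\|\mathcal{H}_k(\mathbf{b}) - \mathbf{a}\|_2 \le \sqrt{\nu}\, \|\mathbf{b} - \mathbf{a}\|_2 .$$ Moreover, the bound is tight: there exist vectors $\mathbf{b}$ and $K$-sparse $\mathbf{a}$ for which equality holds.
   Context: For $\mathbf{v} \in \mathbb{R}^d$, the hard thresholding operator $\mathcal{H}_k(\mathbf{v})$ is the vector obtained from $\mathbf{v}$ by keeping its $k$ entries of largest absolute value and setting all other entries to zero (ties broken lexicographically). Thus $\mathcal{H}_k(\mathbf{v})$ is $k$-sparse. *)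

(* Defs.v *)
From mathcomp Require Import all_boot all_order all_algebra.
Set Implicit Arguments. Unset Strict Implicit. Unset Printing Implicit Defensive.
Import Order.TTheory GRing.Theory Num.Theory.
Local Open Scope ring_scope.

(* Position of index i in the ordering of indices by decreasing absolute
   value, ties broken lexicographically (smaller index first). *)
Definition ht_rank {R : realDomainType} {d : nat} (v : 'rV[R]_d) (i : 'I_d) : nat :=
  #|[set j : 'I_d | (`|v ord0 i| < `|v ord0 j|) || ((`|v ord0 j| == `|v ord0 i|) && (j < i)%N)]|.

Definition hard_threshold {R : realDomainType} {d : nat} (k : nat) (v : 'rV[R]_d)
  : 'rV[R]_d :=
  \row_(i < d) (if (ht_rank v i < k)%N then v ord0 i else 0).

Definition sparse {R : nzRingType} {d : nat} (K : nat) (v : 'rV[R]_d) : Prop :=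
  (#|[set i : 'I_d | v ord0 i != 0%R]| <= K)%N.

Definition norm2 {R : rcfType} {d : nat} (v : 'rV[R]_d) : R :=
  Num.sqrt (\sum_(i < d) v ord0 i ^+ 2).

Definition rho_const {R : rcfType} (d k K : nat) : R :=
  (minn K (d - k))%:R / ((k - K)%:R + (minn K (d - k))%:R).

Definition nu_const {R : rcfType} (d k K : nat) : R :=
  1 + (rho_const d k K + Num.sqrt ((4 + rho_const d k K) * rho_const d k K)) / 2.

(* Main.v *)
Require Import Defs.
From mathcomp Require Import all_boot all_order all_algebra.
From mathcomp Require Import lra ring zify.
Import Order.TTheory GRing.Theory Num.Theory.
Local Open Scope ring_scope.

Definition prec {R : realDomainType} {d : nat} (v : 'rV[R]_d) (j i : 'I_d) : bool :=
  (`|v ord0 i| < `|v ord0 j|) || ((`|v ord0 j| == `|v ord0 i|) && (j < i)%N).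

Lemma rankE (R : realDomainType) d (v : 'rV[R]_d) i :
  ht_rank v i = #|[set j | prec v j i]|.
Proof. by []. Qed.

Lemma prec_trans (R : realDomainType) d (v : 'rV[R]_d) l j i :
  prec v l j -> prec v j i -> prec v l i.
Proof.
rewrite /prec => /orP[h1|/andP[/eqP e1 h1]] /orP[h2|/andP[/eqP e2 h2]]; apply/orP.
- by left; apply: lt_trans h2 h1.
- by left; rewrite -e2.
- by left; rewrite e1.
- by right; rewrite e1 e2 eqxx (ltn_trans h1 h2).
Qed.

Lemma prec_irr (R : realDomainType) d (v : 'rV[R]_d) i : ~~ prec v i i.
Proof. by rewrite /prec ltxx ltnn andbF. Qed.

Lemma prec_total (R : realDomainType) d (v : 'rV[R]_d) i j :
  i != j -> prec v i j || prec v j i.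
Proof.
move=> nij; rewrite /prec.
case: (ltgtP `|v ord0 i| `|v ord0 j|) => h /=; rewrite ?orbT //.
by case: (ltngtP i j) => // e; move: nij; rewrite (val_inj e) eqxx.
Qed.

Lemma rank_lt (R : realDomainType) d (v : 'rV[R]_d) j i :
  prec v j i -> (ht_rank v j < ht_rank v i)%N.
Proof.
move=> pji; rewrite !rankE; apply: proper_card; apply/properP; split.
  by apply/subsetP => l; rewrite !inE => plj; apply: prec_trans plj pji.
by exists j; rewrite !inE ?pji // prec_irr.
Qed.

Lemma rank_ltd (R : realDomainType) d (v : 'rV[R]_d) i : (ht_rank v i < d)%N.
Proof.
rewrite rankE -[X in (_ < X)%N](card_ord d) -cardsT; apply: proper_card.
apply/properP; split; first exact: subsetT.
by exists i; rewrite ?inE ?prec_irr.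
Qed.

Lemma card_ltk n k : (k <= n)%N -> #|[set r : 'I_n | (r < k)%N]| = k.
Proof.
move=> kn.
have winj : injective (widen_ord kn) by move=> x y /(congr1 val) /= e; apply: val_inj.
rewrite -[RHS](card_ord k) -(card_imset _ winj).
apply: eq_card => r; rewrite !inE; apply/idP/imsetP.
  by move=> rk; exists (Ordinal rk) => //; apply: val_inj.
by case=> x _ ->; rewrite /= ltn_ord.
Qed.

Lemma card_S (R : realDomainType) d (v : 'rV[R]_d) k : (k <= d)%N ->
  #|[set i | (ht_rank v i < k)%N]| = k.
Proof.
case: d v => [|n] v kn.
  by move: kn; rewrite leqn0 => /eqP ->; apply: eq_card0 => -[].
pose f (i : 'I_n.+1) : 'I_n.+1 := inord (ht_rank v i).
have fE i : (f i : nat) = ht_rank v i by rewrite inordK // rank_ltd.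
have finj : injective f.
  move=> i j e; apply/eqP; apply: contraT => nij.
  have: ht_rank v i = ht_rank v j by rewrite -!fE e.
  by case/orP: (@prec_total _ _ v _ _ nij) => /rank_lt h e2; move: h; rewrite e2 ltnn.
transitivity #|f @^-1: [set r : 'I_n.+1 | (r < k)%N]|.
  by apply: eq_card => i; rewrite !inE fE.
by rewrite card_preimset // card_ltk.
Qed.

Lemma S_dom (R : realDomainType) d (v : 'rV[R]_d) k i j :
  (ht_rank v i < k)%N -> ~~ (ht_rank v j < k)%N -> `|v ord0 j| <= `|v ord0 i|.
Proof.
move=> hi hj; rewrite leNgt; apply/negP => h.
have : prec v j i by rewrite /prec h.
move/rank_lt => l; move: hj; rewrite (ltn_trans l hi) //.
Qed.

Lemma rho_ge0 (R : rcfType) d k K : 0 <= rho_const d k K :> R.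
Proof. by rewrite /rho_const divr_ge0 // addr_ge0. Qed.

Lemma nu_sq (R : rcfType) d k K :
  (nu_const d k K - 1) ^+ 2 = rho_const d k K * nu_const d k K :> R.
Proof.
rewrite /nu_const; set r := rho_const d k K.
have r0 : 0 <= r := rho_ge0 _ _ _ _.
set s := Num.sqrt _.
have hs : s ^+ 2 = (4 + r) * r by rewrite sqr_sqrtr // mulr_ge0 // addr_ge0.
apply/eqP; rewrite -subr_eq0.
have -> : (1 + (r + s) / 2 - 1) ^+ 2 - r * (1 + (r + s) / 2) = (s ^+ 2 - (4 + r) * r) / 4.
  by field.
by rewrite hs subrr mul0r.
Qed.

Lemma nu_ge1 (R : rcfType) d k K : 1 <= nu_const d k K :> R.
Proof.
rewrite /nu_const lerDl divr_ge0 // addr_ge0 ?sqrtr_ge0 //; exact: rho_ge0.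
Qed.

Lemma rho_bound (R : rcfType) d k K t p : (K <= k)%N -> (t <= minn K (d - k))%N ->
  (k + t <= p + K)%N -> t%:R <= rho_const d k K * p%:R :> R.
Proof.
move=> hKk htM htp; rewrite /rho_const -natrD.
set M := minn K (d - k).
have [D0|Dp] := eqVneq (k - K + M)%N 0%N.
  have -> : t = 0%N by lia.
  by rewrite mulr_ge0 // divr_ge0.
rewrite mulrAC ler_pdivlMr ?ltr0n ?lt0n // -!natrM ler_nat; nia.
Qed.

Lemma main_ineq (R : rcfType) d K k (b a : 'rV[R]_d) : (K <= k)%N -> (k <= d)%N ->
  sparse K a ->
  \sum_i (hard_threshold k b - a) ord0 i ^+ 2 <=
  nu_const d k K * \sum_i (b - a) ord0 i ^+ 2.
Proof.
move=> hKk hkd spa.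
set S := [set i | (ht_rank b i < k)%N].
set A := [set i | a ord0 i != 0].
set T := A :\: S; set P := S :\: A.
have hS : #|S| = k by apply: card_S.
have hA : (#|A| <= K)%N := spa.
have e1 := cardsID S A.
have e2 := cardsID A S.
have e3 : (#|T| <= #|~: S|)%N.
  by apply: subset_leq_card; apply/subsetP => i; rewrite !inE => /andP[].
have e4 := cardsC S; rewrite card_ord in e4.
have AS : #|A :&: S| = #|S :&: A| by rewrite setIC.
have htM : (#|T| <= minn K (d - k))%N. rewrite leq_min; apply/andP; split; rewrite /T. by apply: leq_trans hA; rewrite -e1 leq_addl. rewrite /T in e3; lia.
have htp : (k + #|T| <= #|P| + K)%N by rewrite /T /P; lia.
have hE i : (hard_threshold k b - a) ord0 i =
   (if i \in S then b ord0 i else 0) - a ord0 i by rewrite !mxE inE.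
have bE i : (b - a) ord0 i = b ord0 i - a ord0 i by rewrite !mxE.
have aE i : i \notin A -> a ord0 i = 0 by rewrite inE negbK => /eqP.
set nu := nu_const d k K.
have nu1 : 1 <= nu := nu_ge1 _ _ _ _.
have [t0|tp] := eqVneq #|T| 0%N.
  rewrite mulr_sumr; apply: ler_sum => i _; rewrite hE bE.
  case: ifP => iS.
    have : 0 <= (nu - 1) * (b ord0 i - a ord0 i) ^+ 2 by apply: mulr_ge0; rewrite ?subr_ge0 ?sqr_ge0.
    lra.
  have iA : i \notin A.
    apply: contraT; rewrite negbK => iA.
    by move: t0; rewrite (cardD1 i) in_setD iA iS.
  rewrite aE // !subr0 expr0n /=; apply: mulr_ge0; [lra | exact: sqr_ge0].
set c := nu - 1.
have nuc : nu = c + 1 by rewrite /c subrK.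
have rho0 : 0 < rho_const d k K :> R.
  have Mpos : (0 < minn K (d - k))%N by apply: leq_trans htM; rewrite lt0n.
  rewrite /rho_const divr_gt0 ?ltr0n // -natrD ltr0n; lia.
have cpos : 0 < c.
  rewrite /c /nu /nu_const addrAC subrr add0r divr_gt0 //.
  by rewrite ltr_pwDl ?sqrtr_ge0.
have c2 : c ^+ 2 = rho_const d k K * nu by rewrite /c nu_sq.
have pw i : c * ((hard_threshold k b - a) ord0 i) ^+ 2 <=
    c * nu * ((b - a) ord0 i) ^+ 2 +
    ((if i \in T then nu * b ord0 i ^+ 2 else 0) -
     (if i \in P then c ^+ 2 * b ord0 i ^+ 2 else 0)).
  rewrite hE bE !in_setD nuc.
  case: (boolP (i \in S)) => iS; case: (boolP (i \in A)) => iA /=.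
  - have := sqr_ge0 (b ord0 i - a ord0 i); rewrite subrr addr0; nra.
  - rewrite aE // !subr0 sub0r.
    have -> : c * (c + 1) * b ord0 i ^+ 2 - c ^+ 2 * b ord0 i ^+ 2 = c * b ord0 i ^+ 2 by ring.
    by [].
  - have := sqr_ge0 (c * a ord0 i - (c + 1) * b ord0 i); rewrite subr0; nra.
  - have := sqr_ge0 (b ord0 i); rewrite aE // ?subr0 ?subrr; nra.
have := @ler_sum _ _ (index_enum 'I_d) xpredT _ _ (fun i _ => pw i).
rewrite -mulr_sumr big_split /= -mulr_sumr sumrB.
rewrite -(big_mkcond (fun i => i \in T)) -(big_mkcond (fun i => i \in P)) -!mulr_sumr.
set X := \sum_(i in T) _; set Y := \sum_(i in P) _.
have pXtY : X * #|P|%:R <= Y * #|T|%:R.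
  rewrite !mulr_natr.
  have -> : X *+ #|P| = \sum_(s in P) X by rewrite sumr_const.
  rewrite /Y -sumrMnl.
  apply: ler_sum => s sP; rewrite /X -sumr_const.
  apply: ler_sum => i iT.
  move: sP iT; rewrite !in_setD => /andP[_ sS] /andP[iS _].
  have h := @S_dom _ _ b k s i ltac:(by move: sS; rewrite inE) ltac:(by move: iS; rewrite inE).
  rewrite -(real_normK (num_real (b ord0 i))) -(real_normK (num_real (b ord0 s))).
  by apply: lerXn2r => //; rewrite nnegrE normr_ge0.
have X0 : 0 <= X by apply: sumr_ge0 => i _; exact: sqr_ge0.
have Y0 : 0 <= Y by apply: sumr_ge0 => i _; exact: sqr_ge0.
have tr := @rho_bound R d k K _ _ hKk htM htp.
have pp : (0 < #|P|)%N by rewrite /T in tp htp; lia.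
have pp' : 0 < #|P|%:R :> R by rewrite ltr0n.
have XY : X <= rho_const d k K * Y.
  rewrite -(ler_pM2r pp').
  apply: (le_trans pXtY).
  by rewrite [rho_const _ _ _ * Y]mulrC -mulrA; apply: ler_wpM2l.
have nu0 : 0 <= nu by apply: le_trans nu1.
have key : nu * X <= c ^+ 2 * Y.
  by rewrite c2 [_ * nu]mulrC -mulrA ler_wpM2l.
move=> H; rewrite -(ler_pM2l cpos) mulrA.
apply: (le_trans H); rewrite gerDl subr_le0 //.
Qed.

Lemma sum_piece (R : rcfType) d n1 n2 n3 (c1 c2 c3 : R) :
  (n1 <= n2)%N -> (n2 <= n3)%N -> (n3 <= d)%N ->
  \sum_(i < d) (if (i < n1)%N then c1 else if (i < n2)%N then c2
                else if (i < n3)%N then c3 else 0)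
  = c1 *+ n1 + c2 *+ (n2 - n1) + c3 *+ (n3 - n2).
Proof.
move=> h12 h23 h3d.
rewrite -(big_mkord xpredT (fun i => if (i < n1)%N then c1 else if (i < n2)%N then c2
                else if (i < n3)%N then c3 else 0)).
rewrite (@big_cat_nat _ _ _ n3 0 d) //= [X in _ + X]big1_seq ?addr0; last first.
  move=> i /andP[_]; rewrite mem_index_iota => /andP[hi _].
  by rewrite !ltnNge (leq_trans h12 (leq_trans h23 hi)) (leq_trans h23 hi) hi.
rewrite (@big_cat_nat _ _ _ n2 0 n3) //= (@big_cat_nat _ _ _ n1 0 n2) //=.
rewrite (@eq_big_nat _ _ _ 0 n1 _ (fun _ => c1)); last by move=> i /andP[_ ->].
rewrite (@eq_big_nat _ _ _ n1 n2 _ (fun _ => c2)); last first.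
  by move=> i /andP[h1 h2]; rewrite ltnNge h1 h2.
rewrite (@eq_big_nat _ _ _ n2 n3 _ (fun _ => c3)); last first.
  by move=> i /andP[h1 h2]; rewrite ltnNge (leq_trans h12 h1) /= ltnNge h1 /= h2.
rewrite sumr_const_nat sumr_const_nat sumr_const_nat [(n1 - 0)%N]subn0. reflexivity. Qed.

Lemma rank_mono (R : realDomainType) d (v : 'rV[R]_d) :
  (forall j i : 'I_d, (j <= i)%N -> `|v ord0 i| <= `|v ord0 j|) ->
  forall i, ht_rank v i = i.
Proof.
move=> mono i; rewrite rankE.
transitivity #|[set r : 'I_d | (r < i)%N]|; last by apply: card_ltk; apply: ltnW.
apply: eq_card => j; rewrite !inE /prec.
case: (ltnP j i) => ji.
  have := mono _ _ (ltnW ji); rewrite le_eqVlt => /orP[/eqP->|->] //.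
  by rewrite eqxx orbT.
rewrite andbF orbF; apply/negbTE; rewrite -leNgt; exact: mono.
Qed.

Lemma step_mono (R : realDomainType) d n : forall j i : 'I_d, (j <= i)%N ->
  `|(\row_(l < d) (if (l < n)%N then 1 else 0 : R)) ord0 i| <=
  `|(\row_(l < d) (if (l < n)%N then 1 else 0 : R)) ord0 j|.
Proof.
move=> j i ji; rewrite !mxE.
case: ifP => hi; case: ifP => hj; rewrite ?normr0 ?normr1 ?ler01 ?lexx //.
by exfalso; move: hi hj; lia.
Qed.

Lemma tight_pos (R : rcfType) d K k : (K <= k)%N -> (k <= d)%N ->
  (0 < minn K (d - k))%N ->
  exists (b a : 'rV[R]_d), [/\ sparse K a, b != a &
     norm2 (hard_threshold k b - a) = Num.sqrt (nu_const d k K) * norm2 (b - a)].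
Proof.
move=> hKk hkd Mpos.
set M := minn K (d - k) in Mpos.
have hMK : (M <= K)%N by rewrite geq_minl.
have hMd : (k + M <= d)%N.
  have : (M <= d - k)%N by rewrite geq_minr.
  lia.
set nu := nu_const d k K.
set c := nu - 1.
have nuc : nu = c + 1 by rewrite /c subrK.
have rho0 : 0 < rho_const d k K :> R.
  rewrite /rho_const divr_gt0 ?ltr0n // -natrD ltr0n; lia.
have cpos : 0 < c.
  rewrite /c /nu /nu_const addrAC subrr add0r divr_gt0 //.
  by rewrite ltr_pwDl ?sqrtr_ge0.
have c2 : c ^+ 2 = rho_const d k K * nu by rewrite /c nu_sq.
set Pr : R := (k - K)%:R + M%:R.
have Prpos : 0 < Pr by rewrite /Pr -natrD ltr0n; lia.
have hc2 : c ^+ 2 * Pr = M%:R * (c + 1).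
  by rewrite c2 -nuc /rho_const -/M -/Pr mulrAC divfK // gt_eqF.
set y := (c + 1) / c.
pose b := \row_(i < d) (if (i < k + M)%N then 1 else 0 : R).
pose a := \row_(i < d) (if (i < K - M)%N then 1 else if (i < k)%N then 0
                         else if (i < k + M)%N then y else 0 : R).
have rk i : ht_rank b i = i by apply: rank_mono; apply: step_mono.
have cn0 : c != 0 by rewrite gt_eqF.
have c1n0 : c + 1 != 0 by rewrite gt_eqF //; lra.
have y0 : y != 0 by rewrite /y mulf_neq0 // invr_eq0.
have y1 : y != 1.
  apply/eqP => e; have := congr1 (fun z => z * c) e; rewrite /= /y divfK // mul1r; lra.
have eh i : ((hard_threshold k b - a) ord0 i) ^+ 2 =
   if (i < K - M)%N then 0 else if (i < k)%N then 1
   else if (i < k + M)%N then y ^+ 2 else 0.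
  rewrite !mxE rk.
  case: (ltnP i (K - M)) => h1; case: (ltnP i k) => h2; case: (ltnP i (k + M)) => h3 /=;
    try (by exfalso; lia);
    by rewrite ?subrr ?subr0 ?sub0r ?sqrrN ?expr0n ?expr1n.
have eb i : ((b - a) ord0 i) ^+ 2 =
   if (i < K - M)%N then 0 else if (i < k)%N then 1
   else if (i < k + M)%N then (1 - y) ^+ 2 else 0.
  rewrite !mxE.
  case: (ltnP i (K - M)) => h1; case: (ltnP i k) => h2; case: (ltnP i (k + M)) => h3 /=;
    try (by exfalso; lia);
    by rewrite ?subrr ?subr0 ?sub0r ?sqrrN ?expr0n ?expr1n.
have hA1 : (K - M <= k)%N by lia.
have hA2 : (k <= k + M)%N by lia.
have nu0 : 0 <= nu by rewrite nuc; lra.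
exists b, a; split.
- rewrite /sparse.
  have : (#|[set i | a ord0 i != 0]|%:R : R) = (K - M)%:R + M%:R.
    rewrite -sumr_const big_mkcond /=.
    rewrite (eq_bigr (fun i : 'I_d => if (i < K - M)%N then 1 else if (i < k)%N then 0
                         else if (i < k + M)%N then 1 else 0)); last first.
      move=> i _; rewrite inE !mxE.
      case: (ltnP i (K - M)) => h1; case: (ltnP i k) => h2; case: (ltnP i (k + M)) => h3 /=;
        try (by exfalso; lia); by rewrite ?oner_neq0 ?y0 ?eqxx.
    rewrite (@sum_piece R d (K - M) k (k + M) _ _ _ hA1 hA2 hMd) mul0rn addr0 addKn.
    by [].
  by move/eqP; rewrite -natrD eqr_nat => /eqP ->; lia.
- have kd : (k < d)%N by lia.
  apply/eqP => e; have := congr1 (fun m : 'M[R]_(1, d) => m ord0 (Ordinal kd)) e; rewrite !mxE /=.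
  have h1 : (k < k + M)%N by lia.
  have h2 : (k < K - M)%N = false by apply/negbTE; rewrite -leqNgt; lia.
  rewrite h1 h2 ltnn => /esym/eqP; exact/negP.
- rewrite /norm2 -sqrtrM //; congr Num.sqrt.
  rewrite (eq_bigr _ (fun i _ => eh i)) (eq_bigr _ (fun i _ => eb i)).
  rewrite !(@sum_piece R d (K - M) k (k + M) _ _ _ hA1 hA2 hMd) !mul0rn addKn.
  have eP : ((k - (K - M))%N%:R : R) = Pr by rewrite /Pr -natrD; congr (_%:R); lia.
  rewrite eP -(mulr_natr (y ^+ 2) M) -(mulr_natr ((1 - y) ^+ 2) M) nuc /y.
  have E : forall P0 M0 : R, (0 + P0 + ((c + 1) / c) ^+ 2 * M0) -
      (c + 1) * (0 + P0 + (1 - (c + 1) / c) ^+ 2 * M0) = - (c ^+ 2 * P0 - M0 * (c + 1)) / c.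
    by move=> P0 M0; field.
  by apply/eqP; rewrite -subr_eq0 E hc2 subrr oppr0 mul0r.
Qed.

Lemma tight_zero (R : rcfType) d K k : (0 < d)%N -> (0 < k)%N ->
  minn K (d - k) = 0%N ->
  exists (b a : 'rV[R]_d), [/\ sparse K a, b != a &
     norm2 (hard_threshold k b - a) = Num.sqrt (nu_const d k K) * norm2 (b - a)].
Proof.
move=> d0 k0 M0.
have nu1 : nu_const d k K = 1 :> R.
  by rewrite /nu_const /rho_const M0 !mul0r mulr0 sqrtr0 addr0 mul0r addr0.
pose b := \row_(i < d) (if (i < 1)%N then 1 else 0 : R).
have rk i : ht_rank b i = i by apply: rank_mono; apply: step_mono.
have hb : hard_threshold k b = b.
  apply/rowP => i; rewrite !mxE rk; case: ifP => // ik.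
  by rewrite ifF //; apply/negbTE; rewrite -leqNgt; lia.
exists b, 0; split.
- rewrite /sparse.
  have -> : [set i | (0 : 'rV[R]_d) ord0 i != 0] = set0 by apply/setP => i; rewrite !inE mxE eqxx.
  by rewrite cards0.
- apply/eqP => e; have := congr1 (fun m : 'M[R]_(1, d) => m ord0 (Ordinal d0)) e.
  by rewrite !mxE /= => /eqP; rewrite oner_eq0.
- by rewrite hb nu1 sqrtr1 mul1r.
Qed.

Theorem theorem1 (R : rcfType) (d K k : nat) :
  (0 < d)%N -> (K <= k)%N -> (k <= d)%N ->
  (forall (b a : 'rV[R]_d), sparse K a ->
     norm2 (hard_threshold k b - a) <= Num.sqrt (nu_const d k K) * norm2 (b - a))
  /\
  ((0 < k)%N ->
   exists (b a : 'rV[R]_d), [/\ sparse K a, b != a &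
     norm2 (hard_threshold k b - a) = Num.sqrt (nu_const d k K) * norm2 (b - a)]).
Proof.
move=> d0 hKk hkd; split.
  move=> b a spa; rewrite /norm2 -sqrtrM; last exact: le_trans ler01 (nu_ge1 _ _ _ _).
  by rewrite ler_sqrt ?main_ineq // mulr_ge0 ?sumr_ge0 // => [|i _]; [exact: le_trans ler01 (nu_ge1 _ _ _ _) | exact: sqr_ge0].
move=> k0; case: (posnP (minn K (d - k))) => hM.
  exact: tight_zero.
exact: tight_pos.
Qed.
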